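(* There is an absolute constant $c>0$ such that the following holds. Let $H=(V,E)$ be a hypergraph of rank at most $r$ and maximum degree at most $\Delta$, given with a good coloring and an edge-weighting $a$. Then there is a deterministic $O(r\Delta)$-round LOCAL algorithm that computes a matching $M$ with $$a(M)\ge c\,\frac{a(E)}{r\Delta}.$$
   Context: **Hypergraph notation.** - A matching is a set of pairwise disjoint edges. - An edge-weighting is $a:E\to[0,\infty)$, with $a(L)=\sum_{e\in L}a(e)$. **LOCAL model.** The model is run on the incidence graph $\mathrm{Inc}(H)$ (bipartite, one node per vertex and per edge, where $v$ and $e$ are adjacent iff $v\in e$). In synchronous rounds, nodes do unbounded computation and exchange unbounded messages with neighbours. Nodes have unique IDs, and upper bounds $n,\Delta,r\ (r\ge2)$ are globally known. **Good coloring.** A good coloring of $H$ is a proper vertex coloring of $\mathrm{Inc}(H)^2$ (nodes adjacent iff at distance $\le2$ in $\mathrm{Inc}(H)$) using $\mathrm{poly}(r,\Delta)$ colors. *)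

(* Defs.v *)
From HB Require Import structures.
From mathcomp Require Import all_boot all_order all_algebra.
Set Implicit Arguments. Unset Strict Implicit. Unset Printing Implicit Defensive.
Import Order.TTheory GRing.Theory Num.Theory.

(* A hypergraph: vertex type V, edge type E, each edge e is the vertex set [ev e]
   (ev injective: no repeated edges).  Incidence graph Inc(H) has node type V + E. *)

Definition inc_adj (V E : finType) (ev : E -> {set V}) (x y : V + E) : bool :=
  match x, y with
  | inl v, inr e => v \in ev e
  | inr e, inl v => v \in ev e
  | _, _ => false
  end.

(* proper vertex coloring of Inc(H)^2: distinct nodes at distance 1 or 2 get distinct colors *)
Definition dist2_proper (V E : finType) (ev : E -> {set V}) (col : V + E -> nat) : Prop :=
  forall x y : V + E, x != y ->
    (inc_adj ev x y || [exists z, inc_adj ev x z && inc_adj ev z y]) -> col x != col y.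

Definition rank_le (V E : finType) (ev : E -> {set V}) (r : nat) : Prop :=
  forall e : E, #|ev e| <= r.

Definition maxdeg_le (V E : finType) (ev : E -> {set V}) (D : nat) : Prop :=
  forall v : V, #|[set e : E | v \in ev e]| <= D.

Definition is_matching (V E : finType) (ev : E -> {set V}) (M : {set E}) : Prop :=
  forall e1 e2, e1 \in M -> e2 \in M -> e1 != e2 -> [disjoint ev e1 & ev e2].

Definition weight (R : realFieldType) (E : finType) (a : E -> R) (L : {set E}) : R :=
  (\sum_(e in L) a e)%R.

(* ---- LOCAL model, full-information form ----
   The local input of a node: (is_edge, ID, color, weight) (weight 0 for vertices).
   The knowledge of a node after t synchronous rounds with unbounded messages:
   after 0 rounds, its own input; after t+1 rounds, its own input together with the
   round-t knowledge of all its Inc(H)-neighbours (listed by increasing ID, which is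
   information the node has anyway).  A deterministic t-round LOCAL algorithm is
   exactly a map from round-t knowledge to outputs. *)

Inductive view (R : Type) : Type :=
  | VNode : bool * nat * nat * R -> seq (view R) -> view R.

Section Local.
Variables (R : realFieldType) (V E : finType) (ev : E -> {set V})
          (id : V + E -> nat) (col : V + E -> nat) (a : E -> R).

Definition local_input (x : V + E) : bool * nat * nat * R :=
  match x with
  | inl v => (false, id x, col x, 0%R)
  | inr e => (true, id x, col x, a e)
  end.

Definition nbrs (x : V + E) : seq (V + E) :=
  sort (fun y z => id y <= id z) (enum (inc_adj ev x)).

Fixpoint knowledge (t : nat) (x : V + E) : view R :=
  match t with
  | 0 => VNode (local_input x) [::]
  | t'.+1 => VNode (local_input x) [seq knowledge t' y | y <- nbrs x]
  end.

Definition run_local (t : nat) (A : view R -> bool) : {set E} :=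
  [set e : E | A (knowledge t (inr e))].
End Local.

(* Main.v *)
Require Import Defs.
From HB Require Import structures.
From mathcomp Require Import all_boot all_order all_algebra all_field.
From mathcomp Require Import zify ring lra.
Set Implicit Arguments. Unset Strict Implicit. Unset Printing Implicit Defensive.
Import Order.TTheory GRing.Theory Num.Theory.

Section Sim.
Variables (R : realFieldType) (S : Type).
Variable init : bool * nat * nat * R -> S.
Variable step : nat -> bool * nat * nat * R -> S -> seq S -> S.

Fixpoint cut (n : nat) (v : view R) : view R :=
  match n with
  | 0 => let: VNode i _ := v in VNode i [::]
  | n'.+1 => let: VNode i ch := v in VNode i (map (cut n') ch)
  end.
Definition vinp (v : view R) := let: VNode i _ := v in i.
Definition vch (v : view R) := let: VNode _ c := v in c.
Fixpoint evalV (t : nat) (v : view R) : S :=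
  match t with
  | 0 => init (vinp v)
  | t'.+1 => step t' (vinp v) (evalV t' (cut t' v)) (map (evalV t') (vch v))
  end.

Variables (V E : finType) (ev : E -> {set V}) (id col : V + E -> nat) (a : E -> R).
Fixpoint gst (t : nat) (x : V + E) : S :=
  match t with
  | 0 => init (local_input id col a x)
  | t'.+1 => step t' (local_input id col a x) (gst t' x) (map (gst t') (nbrs ev id x))
  end.
Lemma cutK t x : cut t (knowledge ev id col a t.+1 x) = knowledge ev id col a t x.
Proof.
elim: t x => [|t IH] x //=. rewrite -map_comp. congr VNode. apply: eq_map => y /=. exact: IH.
Qed.
Lemma evalK t x : evalV t (knowledge ev id col a t x) = gst t x.
Proof.
elim: t x => [|t IH] x //=. rewrite cutK IH -map_comp. congr (step _ _ _ _).
apply: eq_map => y; exact: IH.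
Qed.
End Sim.

Record ES (R : Type) := mkES { eid : nat; ec0 : nat; ew : R; efin : bool; efc : nat; edl : R; ejn : bool }.

Section Alg.
Variables (R : realFieldType) (F : finFieldType) (k N : nat).
Local Notation Q := #|F|.
Definition fe (i : nat) : F := nth 0%R (enum F) i.
Definition fi (x : F) : nat := index x (enum F).
Definition dig (c i : nat) : F := fe ((c %/ Q ^ i) %% Q).
Definition Pc (c : nat) : {poly F} := (\poly_(i < k) dig c i + 'X^(k.+1))%R.
Definition curv (j : nat) (f : ES R) : nat :=
  if efin f then efc f else fi ((Pc (ec0 f)).[fe j])%R.
Definition color_step j (s : ES R) (ns : seq (ES R)) :=
  let v := fi ((Pc (ec0 s)).[fe j])%R in
  if ~~ efin s && all (fun f => curv j f != v) ns
  then mkES (eid s) (ec0 s) (ew s) true v (edl s) (ejn s) else s.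
Definition lr_step i (s : ES R) (ns : seq (ES R)) :=
  if efc s == i then mkES (eid s) (ec0 s) (ew s) (efin s) (efc s)
     (Num.max 0 (ew s - \sum_(f <- ns) edl f))%R (ejn s) else s.
Definition un_step i (s : ES R) (ns : seq (ES R)) :=
  if efc s == i then mkES (eid s) (ec0 s) (ew s) (efin s) (efc s) (edl s)
     ((0 < edl s)%R && ~~ has (@ejn R) ns) else s.
Definition Lstep j s ns :=
  if j < N then color_step j s ns
  else if j < N + Q then lr_step (j - N) s ns
  else if j < N + Q + Q then un_step (Q.-1 - (j - N - Q)) s ns
  else s.
Definition St := (ES R * seq (ES R))%type.
Definition ainit (inp : bool * nat * nat * R) : St :=
  (mkES inp.1.1.2 inp.1.2 inp.2 false 0 0%R false, [::]).
Definition astep t (inp : bool * nat * nat * R) (s : St) (ns : seq St) : St :=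
  if inp.1.1.1 then
    (if odd t then (Lstep t./2 s.1 [seq f <- flatten (map snd ns) | eid f != eid s.1], s.2) else s)
  else (if odd t then s else (s.1, map fst ns)).

Lemma Lstep_basic j s ns : let s' := Lstep j s ns in
  [/\ eid s' = eid s, ec0 s' = ec0 s & ew s' = ew s].
Proof.
rewrite /Lstep /color_step /lr_step /un_step; by repeat case: ifP.
Qed.

Variables (V E : finType) (ev : E -> {set V}) (id col : V + E -> nat) (a : E -> R).
Hypothesis idinj : injective id.
Definition G t x := gst ainit astep ev id col a t x.
Arguments G : simpl never.
Definition Lst j e := (G j.*2 (inr e)).1.

Lemma G_succ' t x : G t.+1 x = astep t (local_input id col a x) (G t x) (map (G t) (nbrs ev id x)).
Proof. by []. Qed.

Lemma G_basic t e : let s := (G t (inr e)).1 in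
  [/\ eid s = id (inr e), ec0 s = col (inr e) & ew s = a e].
Proof.
elim: t => [|t IH] //=. rewrite G_succ' /astep /=.
have [h1 h2 h3] := Lstep_basic t./2 (G t (inr e)).1
   [seq f <- flatten (map snd (map (G t) (nbrs ev id (inr e)))) | eid f != eid (G t (inr e)).1].
case: IH => i1 i2 i3. case: ifP => _ //=. by rewrite h1 h2 h3.
Qed.


Lemma G_vert j v : (G j.*2.+1 (inl v)).2 = map (fun y => (G j.*2 y).1) (nbrs ev id (inl v)).
Proof. by rewrite G_succ' /astep /= odd_double /= -map_comp. Qed.

Definition NL j e := [seq f <- flatten (map (fun y => (G j.*2.+1 y).2) (nbrs ev id (inr e)))
                      | eid f != id (inr e)].

Lemma G_succ t x : G t.+1 x = astep t (local_input id col a x) (G t x) (map (G t) (nbrs ev id x)).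
Proof. by []. Qed.

Lemma Lst_succ j e : Lst j.+1 e = Lstep j (Lst j e) (NL j e).
Proof.
rewrite /Lst doubleS /NL [G j.*2.+2 _]G_succ {1}/astep /= odd_double /= uphalf_double.
have -> : G j.*2.+1 (inr e) = G j.*2 (inr e).
  by rewrite G_succ /astep /= odd_double.
case: (G_basic j.*2 e) => -> _ _. by rewrite -map_comp.
Qed.

Lemma NL_big (T : Type) (idx : T) (op : Monoid.com_law idx) (g : ES R -> T) j e :
  \big[op/idx]_(x <- NL j e) g x =
  \big[op/idx]_(v in ev e) \big[op/idx]_(f | (v \in ev f) && (f != e)) g (Lst j f).
Proof.
rewrite /NL big_filter big_flatten big_map /nbrs (perm_big _ (permEl (perm_sort _ _))) big_enum big_sumType.
rewrite [\big[_/_]_(i | inr i \in _) _]big_pred0; last by move=> f; rewrite unfold_in.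
rewrite Monoid.mulm1.
apply: eq_big => [v|v vin]; first by rewrite unfold_in.
rewrite G_vert big_map /nbrs (perm_big _ (permEl (perm_sort _ _))) big_enum_cond big_sumType.
rewrite [\big[_/_]_(i | (inl i \in _) && _) _]big_pred0; last by move=> f; rewrite unfold_in.
rewrite Monoid.mul1m.
apply: eq_big => [f|f fin]; last by [].
rewrite unfold_in /=. case: (G_basic j.*2 f) => -> _ _.
by rewrite (inj_eq idinj) (inj_eq (@inr_inj _ _)).
Qed.

Lemma Lst0 e : Lst 0 e = mkES (id (inr e)) (col (inr e)) (a e) false 0 0%R false.
Proof. by []. Qed.

Definition adj e f := (f != e) && [exists v, (v \in ev e) && (v \in ev f)].

Lemma adj_sym e f : adj e f = adj f e.
Proof.
rewrite /adj eq_sym; congr (_ && _); apply/existsP/existsP => -[v /andP [h1 h2]];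
  by exists v; rewrite h1 h2.
Qed.

Lemma NL_all p j e : all p (NL j e) = [forall f, adj e f ==> p (Lst j f)].
Proof.
rewrite -big_all NL_big big_andE; apply/forall_inP/forallP => [H f | H v vin].
  apply/implyP => /andP [fne /existsP [v /andP [v1 v2]]].
  have := H v v1; rewrite big_andE => /forall_inP; apply. by rewrite v2 fne.
rewrite big_andE; apply/forall_inP => f /andP [vf fne]. have := H f.
rewrite /adj fne /=; move/implyP; apply. apply/existsP; exists v; by rewrite vin vf.
Qed.

Lemma NL_has p j e : has p (NL j e) = [exists f, adj e f && p (Lst j f)].
Proof.
apply/negb_inj; rewrite -all_predC NL_all negb_exists; apply/forallP/forallP => H f;
  by have := H f; rewrite negb_and implybE.
Qed.

Lemma card_bigcup_le (I T : finType) (P : pred I) (A : I -> {set T}) :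
  #|\bigcup_(i | P i) A i| <= \sum_(i | P i) #|A i|.
Proof.
apply: (@big_ind2 {set T} nat (fun S n => #|S| <= n)) => //.
- by rewrite cards0.
- move=> S1 n1 S2 n2 h1 h2; apply: leq_trans (leq_card_setU _ _) _; exact: leq_add.
Qed.

Lemma Lst_basic j e : [/\ eid (Lst j e) = id (inr e), ec0 (Lst j e) = col (inr e) & ew (Lst j e) = a e].
Proof. exact: G_basic. Qed.

Variables (r D : nat).
Hypothesis hrank : rank_le ev r.
Hypothesis hdeg : maxdeg_le ev D.
Hypothesis hcol : dist2_proper ev col.
Hypothesis hcolb : forall x, col x < (r + D) ^ k.
Hypothesis hQ : r + D <= Q.
Hypothesis hN : (2 * k.+1) * (r * D) < N.
Hypothesis hNQ : N <= Q.

Lemma card_adj e : #|[set f | adj e f]| <= r * D.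
Proof.
have sub : [set f | adj e f] \subset \bigcup_(v in ev e) [set f | v \in ev f].
  apply/subsetP => f; rewrite inE => /andP [_ /existsP [v /andP [h1 h2]]].
  by apply/bigcupP; exists v => //; rewrite inE.
apply: leq_trans (subset_leq_card sub) _.
apply: leq_trans (card_bigcup_le _ _) _.
apply: (@leq_trans (\sum_(v in ev e) D)); first by apply: leq_sum => v _; exact: hdeg.
rewrite sum_nat_const; exact: leq_mul (hrank e) (leqnn D).
Qed.

Lemma adj_col e f : adj e f -> col (inr e) != col (inr f).
Proof.
move=> /andP [fne /existsP [v /andP [h1 h2]]]. apply: hcol.
  by rewrite (inj_eq (@inr_inj _ _)) eq_sym.
apply/orP; right; apply/existsP; exists (inl v); by rewrite /= h1 h2.
Qed.

Definition vv j e := fi ((Pc (col (inr e))).[fe j])%R.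

Lemma step_col j e : j < N -> Lst j.+1 e =
  if ~~ efin (Lst j e) && [forall f, adj e f ==> (curv j (Lst j f) != vv j e)]
  then mkES (eid (Lst j e)) (ec0 (Lst j e)) (ew (Lst j e)) true (vv j e) (edl (Lst j e)) (ejn (Lst j e))
  else Lst j e.
Proof.
move=> hj. rewrite Lst_succ /Lstep hj /color_step NL_all.
by case: (Lst_basic j e) => _ -> _.
Qed.

Lemma fin_keep j e : efin (Lst j e) -> efin (Lst j.+1 e) /\ efc (Lst j.+1 e) = efc (Lst j e).
Proof.
move=> h; rewrite Lst_succ /Lstep /color_step /lr_step /un_step h /=.
by repeat (case: ifP => _ //=).
Qed.

Lemma fin_keepn j j' e : j <= j' -> efin (Lst j e) -> efin (Lst j' e) /\ efc (Lst j' e) = efc (Lst j e).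
Proof.
move=> hjj h; elim: j' hjj => [|j' IH]; first by rewrite leqn0 => /eqP Hj; subst j.
rewrite leq_eqVlt => /orP [/eqP Hj| hj]; first by subst j.
have [h1 h2] := IH hj; have [h3 h4] := fin_keep h1. by rewrite h3 h4 h2.
Qed.

Lemma keep_late j e : N <= j -> efin (Lst j.+1 e) = efin (Lst j e) /\ efc (Lst j.+1 e) = efc (Lst j e).
Proof.
move=> hj; rewrite Lst_succ /Lstep ltnNge hj /= /lr_step /un_step.
by repeat (case: ifP => _ //=).
Qed.

Lemma Q0 : 0 < Q.
Proof. by apply/card_gt0P; exists 0%R. Qed.

Lemma fi_lt x : fi x < Q.
Proof. by rewrite /fi cardE index_mem mem_enum. Qed.

Lemma fc_bound j e : efin (Lst j e) -> efc (Lst j e) < Q.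
Proof.
elim: j => [|j IH] //. case hf: (efin (Lst j e)).
  by have [_ ->] := fin_keep hf => _; exact: IH.
case: (ltnP j N) => hj.
  rewrite step_col // hf /=. case: ifP => _ /=; last by rewrite hf.
  by move=> _; apply: fi_lt.
by have [-> _] := keep_late e hj; rewrite hf.
Qed.

Lemma newly j e : ~~ efin (Lst j e) -> efin (Lst j.+1 e) ->
  j < N /\ efc (Lst j.+1 e) = vv j e /\ forall f, adj e f -> curv j (Lst j f) != vv j e.
Proof.
move=> h1 h2. case: (ltnP j N) => hj; last first.
  by have [h3 _] := keep_late e hj; rewrite h3 (negbTE h1) in h2.
move: h2; rewrite step_col // h1 /=. case: ifP => [/forallP H _ | _]; last by rewrite (negbTE h1).
split => //; split => // f af. by have := H f; rewrite af.
Qed.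

Lemma curv_fin j f : j < N -> efin (Lst j.+1 f) -> curv j (Lst j f) = efc (Lst j.+1 f).
Proof.
move=> hj h. case hf: (efin (Lst j f)).
  by have [_ ->] := fin_keep hf; rewrite /curv hf.
have [_ [-> _]] := newly (negbT hf) h.
by rewrite /curv hf; case: (Lst_basic j f) => _ -> _.
Qed.

Lemma proper j : j <= N -> forall e f, adj e f -> efin (Lst j e) -> efin (Lst j f) ->
  efc (Lst j e) != efc (Lst j f).
Proof.
elim: j => [|j IH] hj e f af //.
have hjN : j < N by [].
move=> he1 hf1.
case he: (efin (Lst j e)); case hf: (efin (Lst j f)).
- have [_ ->] := fin_keep he; have [_ ->] := fin_keep hf. exact: IH (ltnW hj) e f af he hf.
- rewrite -(curv_fin hjN he1). have [_ [-> H]] := newly (negbT hf) hf1.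
  apply: H. by rewrite adj_sym.
- rewrite -(curv_fin hjN hf1). have [_ [-> H]] := newly (negbT he) he1.
  by rewrite eq_sym; apply: H.
- rewrite -(curv_fin hjN hf1). have [_ [-> H]] := newly (negbT he) he1.
  by rewrite eq_sym; apply: H.
Qed.

Lemma leq_expl m n e : m <= n -> m ^ e <= n ^ e.
Proof. move=> h; elim: e => [|e IH]; rewrite ?expn0 // !expnS; exact: leq_mul. Qed.

Lemma digits_inj q kk c1 c2 : 0 < q -> c1 < q ^ kk -> c2 < q ^ kk ->
  (forall i, i < kk -> c1 %/ q ^ i %% q = c2 %/ q ^ i %% q) -> c1 = c2.
Proof.
move=> q0; elim: kk c1 c2 => [|kk IH] c1 c2.
  by rewrite expn0 !ltnS !leqn0 => /eqP -> /eqP ->.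
move=> h1 h2 H.
have e1 : c1 %/ q = c2 %/ q.
  apply: IH; rewrite ?ltn_divLR // -?expnSr //.
  by move=> i hi; have := H i.+1 hi; rewrite expnS !divnMA.
have := H 0 (ltn0Sn _); rewrite expn0 !divn1 => e0.
by rewrite (divn_eq c1 q) (divn_eq c2 q) e1 e0.
Qed.

Lemma fe_inj i1 i2 : i1 < Q -> i2 < Q -> fe i1 = fe i2 -> i1 = i2.
Proof. by move=> h1 h2 /eqP; rewrite /fe nth_uniq ?enum_uniq // -?cardE // => /eqP. Qed.

Lemma Pc_coef c i : i < k -> ((Pc c)`_i = dig c i)%R.
Proof.
move=> hi; rewrite /Pc coefD coef_poly hi coefXn.
by rewrite (ltn_eqF (ltnW hi : i < k.+1)) addr0.
Qed.

Lemma Pc_diff_size c1 c2 : size (Pc c1 - Pc c2)%R <= k.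
Proof.
rewrite /Pc opprD addrACA subrr addr0. apply: leq_trans (size_add _ _) _.
by rewrite geq_max size_opp !size_poly.
Qed.

Lemma Pc_diff_neq c1 c2 : c1 < Q ^ k -> c2 < Q ^ k -> c1 != c2 -> (Pc c1 - Pc c2 != 0)%R.
Proof.
move=> h1 h2; apply: contra_neq => H.
apply: (digits_inj Q0 h1 h2) => i hi.
apply: fe_inj; [exact: ltn_pmod Q0 | exact: ltn_pmod Q0 |].
have := congr1 (fun p : {poly F} => (p`_i)%R) H.
rewrite coefB !Pc_coef // coef0 => /eqP; rewrite subr_eq0 => /eqP.
by [].
Qed.

Lemma Pc_C_neq c x : (Pc c - x%:P != 0)%R.
Proof.
apply/eqP => H; have := congr1 (fun p : {poly F} => (p`_k.+1)%R) H.
rewrite coefB /Pc coefD coef_poly ltnNge leqnSn /= coefXn eqxx coefC /= coef0 add0r subr0.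
by move/eqP; rewrite oner_eq0.
Qed.

Lemma Pc_C_size c x : size (Pc c - x%:P)%R <= k.+2.
Proof.
apply: leq_trans (size_add _ _) _; rewrite geq_max size_opp size_polyC; apply/andP; split.
  apply: leq_trans (size_add _ _) _; rewrite geq_max size_polyXn leqnn andbT.
  exact: leq_trans (size_poly _ _) (leqW (leqW (leqnn k))).
exact: leq_trans (leq_b1 _) _.
Qed.

Lemma roots_card (p : {poly F}) : p != 0%R -> #|[set x | root p x]| < size p.
Proof.
move=> pn0; rewrite cardE; apply: max_poly_roots pn0 _ (enum_uniq _).
by apply/allP => x; rewrite mem_enum inE.
Qed.

Lemma term e : efin (Lst N e).
Proof.
apply/negPn/negP => hn.
have hj : forall j, j <= N -> ~~ efin (Lst j e).
  move=> j hjN; apply/negP => hf; have [h _] := fin_keepn hjN hf; by rewrite h in hn.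
pose ce := col (inr e).
pose Bad := \bigcup_(f | adj e f) ([set x : F | root (Pc ce - Pc (col (inr f)))%R x] :|:
              [set x | root (Pc ce - (fe (efc (Lst N f)))%:P)%R x]).
have sub : [set fe (nat_of_ord j) | j : 'I_N] \subset Bad.
  apply/subsetP => _ /imsetP [j _ ->].
  have hjN : j < N := ltn_ord j.
  have nf1 : ~~ efin (Lst j.+1 e) := hj _ hjN.
  move: nf1; rewrite step_col // (hj _ (ltnW hjN)) /=.
  case: ifP => [_ //| /negbT]. rewrite negb_forall => /existsP [f].
  rewrite negb_imply negbK => /andP [af /eqP hc] _.
  apply/bigcupP; exists f => //. rewrite !inE.
  case hf: (efin (Lst j f)).
  - apply/orP; right. have [_ hfc] := fin_keepn (ltnW hjN) hf.
    move: hc; rewrite /curv hf -hfc => ->. rewrite /vv /fe /fi nth_index ?mem_enum //.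
    by rewrite rootE hornerD hornerN hornerC subrr.
  - apply/orP; left. move: hc; rewrite /curv hf; case: (Lst_basic j f) => _ -> _.
    rewrite /vv /fi => hc.
    have hh : ((Pc (col (inr f))).[fe j] = (Pc ce).[fe j])%R.
      by apply: (index_inj 0%R) hc; rewrite mem_enum.
    by rewrite rootE hornerD hornerN hh subrr.
have cardI : #|[set fe (nat_of_ord j) | j : 'I_N]| = N.
  rewrite card_imset ?card_ord // => j1 j2 H; apply: val_inj.
  exact: fe_inj (leq_trans (ltn_ord j1) hNQ) (leq_trans (ltn_ord j2) hNQ) H.
have hce : ce < Q ^ k := leq_trans (hcolb _) (leq_expl k hQ).
have cardB : #|Bad| <= #|[set f | adj e f]| * (2 * k.+1).
  apply: leq_trans (card_bigcup_le _ _) _.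
  apply: (@leq_trans (\sum_(f | adj e f) (2 * k.+1))).
    apply: leq_sum => f af. apply: leq_trans (leq_card_setU _ _) _.
    rewrite mul2n -addnn. apply: leq_add.
      have hcf : col (inr f) < Q ^ k := leq_trans (hcolb _) (leq_expl k hQ).
      apply: leq_trans (ltnW (roots_card (Pc_diff_neq hce hcf (adj_col af)))) _.
      exact: leq_trans (Pc_diff_size _ _) (leqnSn _).
    rewrite -ltnS; exact: leq_trans (roots_card (Pc_C_neq _ _)) (Pc_C_size _ _).
  rewrite (eq_bigl (fun f => f \in [set f | adj e f])); last by move=> f; rewrite inE.
  by rewrite sum_nat_const.
have := subset_leq_card sub; rewrite cardI => h.
have := leq_trans h (leq_trans cardB (leq_mul (card_adj e) (leqnn _))).
by rewrite mulnC leqNgt hN.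
Qed.

Definition fcol e := efc (Lst N e).

Lemma fcN j e : N <= j -> efin (Lst j e) /\ efc (Lst j e) = fcol e.
Proof. move=> hj; exact: fin_keepn hj (term e). Qed.

Lemma fcol_lt e : fcol e < Q.
Proof. exact: fc_bound (term e). Qed.

Lemma proper_fcol e f : adj e f -> fcol e != fcol f.
Proof. move=> af; exact: proper (leqnn N) e f af (term e) (term f). Qed.

Lemma ph1 j e : j <= N -> edl (Lst j e) = 0%R /\ ejn (Lst j e) = false.
Proof.
elim: j => [|j IH] hj //. have hjN : j < N by [].
have [h1 h2] := IH (ltnW hj).
rewrite Lst_succ /Lstep hjN /color_step; case: ifP => _ //=.
Qed.

Lemma step_lr j e : N <= j -> j < N + Q -> Lst j.+1 e = lr_step (j - N) (Lst j e) (NL j e).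
Proof. move=> h1 h2; by rewrite Lst_succ /Lstep ltnNge h1 /= h2. Qed.

Lemma step_un j e : N + Q <= j -> j < N + Q + Q ->
  Lst j.+1 e = un_step (Q.-1 - (j - N - Q)) (Lst j e) (NL j e).
Proof.
move=> h1 h2; rewrite Lst_succ /Lstep h2.
have -> : (j < N) = false by apply/negbTE; rewrite -leqNgt; apply: leq_trans h1; exact: leq_addr.
by rewrite ltnNge h1.
Qed.

Lemma ph2_ejn i e : i <= Q -> ejn (Lst (N + i) e) = false.
Proof.
elim: i => [|i IH] hi; first by rewrite addn0; case: (ph1 e (leqnn N)).
rewrite addnS step_lr ?leq_addr //; last by rewrite ltn_add2l.
rewrite /lr_step; case: ifP => _ /=; exact: IH (ltnW hi).
Qed.

Lemma ph2_zero i e : i <= Q -> i <= fcol e -> edl (Lst (N + i) e) = 0%R.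
Proof.
elim: i => [|i IH] hi hf; first by rewrite addn0; case: (ph1 e (leqnn N)).
rewrite addnS step_lr ?leq_addr //; last by rewrite ltn_add2l.
rewrite /lr_step (fcN _ (leq_addr _ _)).2 addKn.
have -> : (fcol e == i) = false by apply/negbTE; rewrite neq_ltn hf orbT.
exact: IH (ltnW hi) (ltnW hf).
Qed.

Lemma ph2_keep i e : i <= Q -> fcol e < i -> edl (Lst (N + i) e) = edl (Lst (N + (fcol e).+1) e).
Proof.
elim: i => [|i IH] hi hf //.
rewrite ltnS leq_eqVlt in hf; case/orP: hf => [/eqP -> //| hf].
rewrite addnS step_lr ?leq_addr //; last by rewrite ltn_add2l.
rewrite /lr_step (fcN _ (leq_addr _ _)).2 addKn.
have -> : (fcol e == i) = false by apply/negbTE; rewrite neq_ltn hf.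
exact: IH (ltnW hi) hf.
Qed.

Lemma ph2_val e : edl (Lst (N + (fcol e).+1) e) =
  Num.max 0%R (a e - \sum_(x <- NL (N + fcol e) e) edl x)%R.
Proof.
rewrite addnS step_lr ?leq_addr //; last by rewrite ltn_add2l fcol_lt.
rewrite /lr_step (fcN _ (leq_addr _ _)).2 addKn eqxx /=.
by case: (Lst_basic (N + fcol e) e) => _ _ ->.
Qed.

Definition delta e := edl (Lst (N + Q) e).

Lemma delta_eq e : delta e = edl (Lst (N + (fcol e).+1) e).
Proof. exact: ph2_keep (leqnn _) (fcol_lt e). Qed.

Lemma dl_at e f : edl (Lst (N + fcol e) f) = if fcol f < fcol e then delta f else 0%R.
Proof.
case: ifP => h.
  by rewrite delta_eq; apply: ph2_keep h; exact: ltnW (fcol_lt e).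
by apply: ph2_zero; [exact: ltnW (fcol_lt e) | rewrite leqNgt h].
Qed.

Definition Sl e := (\sum_(v in ev e) \sum_f
   (if (v \in ev f) && (f != e) then (if (fcol f < fcol e)%N then delta f else 0) else 0))%R.

Lemma delta_def e : delta e = Num.max 0%R (a e - Sl e)%R.
Proof.
rewrite delta_eq ph2_val NL_big /Sl.
congr (Num.max _ (_ - _))%R. apply: eq_bigr => v _. rewrite big_mkcond /=.
apply: eq_bigr => f _. by case: ifP => _ //; rewrite dl_at.
Qed.

Lemma ph3_dl i e : i <= Q -> edl (Lst (N + Q + i) e) = delta e.
Proof.
elim: i => [|i IH] hi; first by rewrite addn0.
rewrite addnS step_un ?leq_addr //; last by rewrite ltn_add2l.
rewrite /un_step; case: ifP => _ /=; exact: IH (ltnW hi).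
Qed.

Lemma ph3_zero i e : i <= Q -> fcol e < Q - i -> ejn (Lst (N + Q + i) e) = false.
Proof.
elim: i => [|i IH] hi hf; first by rewrite addn0 ph2_ejn.
rewrite addnS step_un ?leq_addr //; last by rewrite ltn_add2l.
rewrite /un_step (fcN _ (leq_trans (leq_addr _ _) (leq_addr _ _))).2.
have -> : N + Q + i - N - Q = i by lia.
have -> : (fcol e == Q.-1 - i) = false by apply/negbTE; lia.
apply: IH; lia.
Qed.

Definition Jv e := ejn (Lst (N + Q + (Q - fcol e)) e).

Lemma ph3_keep i e : i <= Q -> Q - i <= fcol e -> ejn (Lst (N + Q + i) e) = Jv e.
Proof.
have hfl := fcol_lt e.
elim: i => [|i IH] hi hf; first by move: hf; rewrite subn0 leqNgt hfl.
case: (leqP (Q - i) (fcol e)) => hf2; last first.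
  have -> : i.+1 = Q - fcol e by lia. by [].
rewrite addnS step_un ?leq_addr //; last by rewrite ltn_add2l.
rewrite /un_step (fcN _ (leq_trans (leq_addr _ _) (leq_addr _ _))).2.
have -> : N + Q + i - N - Q = i by lia.
have -> : (fcol e == Q.-1 - i) = false by apply/negbTE; lia.
apply: IH => //; exact: ltnW.
Qed.

Lemma ar1 q c d : c < q -> c < d -> q - (q.-1 - c) <= d. Proof. lia. Qed.
Lemma ar2 q c d : c < q -> d <= c -> d < q - (q.-1 - c). Proof. lia. Qed.

Lemma ph3_val e : Jv e = (0 < delta e)%R && ~~ [exists f, adj e f && ((fcol e < fcol f) && Jv f)].
Proof.
have hfl := fcol_lt e.
rewrite /Jv.
have -> : Q - fcol e = (Q.-1 - fcol e).+1 by lia.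
rewrite addnS step_un ?leq_addr //; last by rewrite ltn_add2l; lia.
rewrite /un_step (fcN _ (leq_trans (leq_addr _ _) (leq_addr _ _))).2.
have -> : N + Q + (Q.-1 - fcol e) - N - Q = Q.-1 - fcol e by lia.
have -> : Q.-1 - (Q.-1 - fcol e) = fcol e by lia.
rewrite eqxx /= ph3_dl; last exact: leq_trans (leq_subr _ _) (leq_pred _).
congr (_ && ~~ _). rewrite NL_has. apply: eq_existsb => f. congr (_ && _).
case: (ltnP (fcol e) (fcol f)) => h /=.
  rewrite ph3_keep //; first exact: leq_trans (leq_subr _ _) (leq_pred _). exact: ar1.
rewrite ph3_zero //; first exact: leq_trans (leq_subr _ _) (leq_pred _). exact: ar2.
Qed.

Lemma Jv_match e1 e2 : Jv e1 -> Jv e2 -> e1 != e2 -> [disjoint ev e1 & ev e2].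
Proof.
move=> j1 j2 ne; apply/pred0P => v /=; apply/negbTE/negP => /andP [h1 h2].
have af : adj e1 e2 by rewrite /adj eq_sym ne /=; apply/existsP; exists v; rewrite h1 h2.
have pf := proper_fcol af.
case: (ltngtP (fcol e1) (fcol e2)) => h.
- move: j1; rewrite ph3_val => /andP [_ /negP]; apply; apply/existsP; exists e2.
  by rewrite af h j2.
- move: j2; rewrite ph3_val => /andP [_ /negP]; apply; apply/existsP; exists e1.
  by rewrite adj_sym af h j1.
- by rewrite h eqxx in pf.
Qed.

Lemma delta_ge0 e : (0 <= delta e)%R.
Proof. by rewrite delta_def le_max lexx. Qed.

Lemma Sl_ge0 e : (0 <= Sl e)%R.
Proof.
apply: sumr_ge0 => v _; apply: sumr_ge0 => f _.
by case: ifP => _ //; case: ifP => _ //; exact: delta_ge0.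
Qed.

Lemma a_le e : (a e <= delta e + Sl e)%R.
Proof. by rewrite -lerBlDr delta_def le_max lexx orbT. Qed.

Lemma a_eq e : Jv e -> a e = (delta e + Sl e)%R.
Proof.
rewrite ph3_val => /andP [hp _].
have hd : delta e = (a e - Sl e)%R.
  move: hp; rewrite delta_def lt_max ltxx /= => hp. by rewrite max_r // ltW.
by rewrite hd subrK.
Qed.

Definition cc g f := ((if g == f then delta f else 0) + \sum_(v in ev g)
   (if (v \in ev f) && (f != g) then (if (fcol f < fcol g)%N then delta f else 0) else 0))%R.

Lemma cc_ge0 g f : (0 <= cc g f)%R.
Proof.
rewrite /cc addr_ge0 //; first by case: ifP => _ //; exact: delta_ge0.
by apply: sumr_ge0 => v _; case: ifP => _ //; case: ifP => _ //; exact: delta_ge0.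
Qed.

Lemma cc_sum g : (\sum_f cc g f = delta g + Sl g)%R.
Proof.
rewrite big_split /=; congr (_ + _)%R.
  rewrite (bigD1 g) //= eqxx big1 ?addr0 // => f; by rewrite eq_sym => /negbTE ->.
by rewrite /Sl exchange_big.
Qed.

Lemma cover f : (delta f <= \sum_(g | Jv g) cc g f)%R.
Proof.
have := delta_ge0 f; rewrite le0r => /orP [/eqP -> | hp].
  by apply: sumr_ge0 => g _; exact: cc_ge0.
case hJ: (Jv f).
  have h1 : (delta f <= cc f f)%R.
    rewrite /cc eqxx lerDl; apply: sumr_ge0 => v _. by rewrite andbF.
  apply: le_trans h1 _. rewrite (bigD1 f) //= lerDl. by apply: sumr_ge0 => g _; exact: cc_ge0.
move: hJ; rewrite ph3_val hp /= => /negbFE /existsP [g /andP [afg /andP [hlt hJg]]].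
have h1 : (delta f <= cc g f)%R.
  case/andP: afg => gnf /existsP [v /andP [vf vg]].
  rewrite /cc -{1}(add0r (delta f)); apply: lerD.
    by case: ifP => _ //; exact: delta_ge0.
  rewrite (bigD1 v) //= vf eq_sym gnf hlt /= lerDl.
  by apply: sumr_ge0 => w _; case: ifP => _ //; exact: delta_ge0.
apply: le_trans h1 _. rewrite (bigD1 g) //= lerDl. by apply: sumr_ge0 => h _; exact: cc_ge0.
Qed.

Lemma sum_delta_le : (\sum_f delta f <= \sum_(g | Jv g) a g)%R.
Proof.
apply: le_trans (ler_sum _ (fun f _ => cover f)) _.
rewrite exchange_big /=; apply: ler_sum => g hg. by rewrite cc_sum (a_eq hg).
Qed.

Lemma sum_Sl_le : (\sum_e Sl e <= (r * D)%:R * \sum_f delta f)%R.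
Proof.
pose Y v := (\sum_f (if v \in ev f then delta f else 0))%R.
have Y0 v : (0 <= Y v)%R by apply: sumr_ge0 => f _; case: ifP => _ //; exact: delta_ge0.
apply: (@le_trans _ _ (\sum_e \sum_(v in ev e) Y v)%R).
  apply: ler_sum => e _; apply: ler_sum => v _; apply: ler_sum => f _.
  case: ifP => [/andP [-> _] | _]; last by case: ifP => _ //; exact: delta_ge0.
  case: ifP => _; [exact: lexx | exact: delta_ge0].
rewrite (eq_bigr (fun e => \sum_v (if v \in ev e then Y v else 0))%R); last by move=> e _; rewrite big_mkcond.
rewrite exchange_big /=.
apply: (@le_trans _ _ (\sum_v (Y v *+ D))%R).
  apply: ler_sum => v _.
  rewrite -big_mkcond /= (eq_bigl (fun e => e \in [set e | v \in ev e])); last by move=> e; rewrite inE.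
  rewrite sumr_const; apply: ler_wpMn2l; [exact: Y0 | exact: hdeg].
apply: (@le_trans _ _ ((\sum_f delta f *+ r) *+ D)%R).
  rewrite sumrMnl; apply: ler_wMn2r.
  rewrite /Y exchange_big /=. apply: ler_sum => f _.
  rewrite -big_mkcond /= (eq_bigl (fun v => v \in ev f)) //.
  rewrite sumr_const; apply: ler_wpMn2l; [exact: delta_ge0 | exact: hrank].
by rewrite sumrMnl mulr_natl mulrnA.
Qed.

Lemma final_weight : 0 < r * D ->
  (2^-1 * \sum_e a e <= (r * D)%:R * \sum_(g | Jv g) a g)%R.
Proof.
move=> hrd.
have h1 : (\sum_e a e <= \sum_e delta e + \sum_e Sl e)%R.
  by rewrite -big_split /=; apply: ler_sum => e _; exact: a_le.
have h2 := sum_Sl_le. have h3 := sum_delta_le.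
have h4 : (0 <= \sum_f delta f)%R by apply: sumr_ge0 => f _; exact: delta_ge0.
have h5 : (1 <= ((r * D)%:R : R))%R by rewrite ler1n.
move: h1 h2 h3 h4 h5.
set W := (\sum_e a e)%R; set Dl := (\sum_f delta f)%R; set AM := (\sum_(g | Jv g) a g)%R.
set S := (\sum_e Sl e)%R; set x := (((r * D)%:R : R))%R.
move=> h1 h2 h3 h4 h5. nra.
Qed.
End Alg.

Theorem lemma2p3 :
  exists c : rat, (0 < c)%R /\
  forall (R : realFieldType) (k : nat),
  exists C : nat,
  forall (n r D : nat), 2 <= r -> 1 <= D ->
  exists (t : nat) (A : view R -> bool),
    t <= C * r * D /\
    forall (V E : finType) (ev : E -> {set V}) (id col : V + E -> nat) (a : E -> R),
      injective ev ->
      #|V| <= n ->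
      rank_le ev r ->
      maxdeg_le ev D ->
      injective id ->
      dist2_proper ev col ->
      (forall x, col x < (r + D) ^ k) ->
      (forall e, 0 <= a e)%R ->
      let M := run_local ev id col a t A in
      is_matching ev M /\
      (ratr c * weight a [set: E] <= (r * D)%:R * weight a M)%R.
Proof.
exists (2^-1)%R; split; first by [].
move=> R k; exists (10 * (2 * k + 5)) => n r D hr hD.
pose N := (2 * k.+1) * (r * D) + 1.
pose M := N + r + D.
have pr2 : prime 2 by [].
pose PF := pPrimePowerField pr2 (ltn0Sn (trunc_log 2 M)).
pose F := s2val PF.
have hF : #|F| = 2 ^ (trunc_log 2 M).+1 := s2valP' PF.
have hM0 : 0 < M by rewrite /M /N; lia.
have hMQ : M < #|F| by rewrite hF; exact: trunc_log_ltn.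
have hQM : #|F| <= 2 * M.
  by rewrite hF expnS leq_mul2l /=; exact: trunc_logP.
pose t := (N + #|F| + #|F|).*2.
exists t, (fun v => ejn (evalV (@ainit R) (astep F k N) t v).1).
split.
  have hrD : 1 <= r * D by rewrite muln_gt0; apply/andP; split; lia.
  have h1 : r <= r * D by rewrite leq_pmulr.
  have h2 : D <= r * D by rewrite leq_pmull //; lia.
  rewrite /t -!addnn. rewrite /M /N in hQM *. nia.
move=> V E ev id col a evinj hn hrank hdeg idinj hcol hcolb ha /=.
have hQ : r + D <= #|F| by apply: leq_trans (ltnW hMQ); rewrite /M -addnA leq_addl.
have hN : (2 * k.+1) * (r * D) < N by rewrite /N addn1.
have hNQ : N <= #|F| by apply: leq_trans (ltnW hMQ); rewrite /M -addnA leq_addr.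
have hset : run_local ev id col a t (fun v => ejn (evalV (@ainit R) (astep F k N) t v).1)
   = [set e | Jv F k N ev id col a e].
  apply/setP => e; rewrite !inE evalK.
  have := ph3_keep idinj hrank hdeg hcol hcolb hQ hN hNQ (leqnn #|F|) (_ : #|F| - #|F| <= fcol F k N ev id col a e).
  rewrite subnn => /(_ isT) <-. by [].
rewrite hset; split.
  move=> e1 e2; rewrite !inE => h1 h2 hne. exact: (Jv_match idinj hrank hdeg hcol hcolb hQ hN hNQ h1 h2 hne).
have hrD : 0 < r * D by rewrite muln_gt0; apply/andP; split; lia.
have := final_weight a idinj hrank hdeg hcol hcolb hQ hN hNQ hrD.
rewrite /weight.
have -> : (\sum_(e in [set: E]) a e = \sum_e a e)%R by apply: eq_bigl => e; rewrite inE.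
have -> : (\sum_(e in [set e | Jv F k N ev id col a e]) a e = \sum_(e | Jv F k N ev id col a e) a e)%R.
  by apply: eq_bigl => e; rewrite inE.
suff -> : ratr (2^-1 : rat) = (2^-1 : R)%R by [].
by rewrite fmorphV /= ratr_nat.
Qed.
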